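(* Let $g\in\mathrm{PLA}$ with PLA coefficients $\hat g(n)$, $n\ge0$, and let $t\in\mathbb{T}$ be such that $g^*(t)=A<\infty$. Then the power series $G(z)=\sum_{n\ge0}\hat g(n)z^n$ converges for $|z|<1$ and $|G(z)|\le 3A$ for all $z\in Q_t$ with $|z|<1$.
   Context: $\mathrm{PLA}$ is the set of measurable $g$ on $\mathbb{T}=\mathbb{R}/2\pi\mathbb{Z}$ for which there exist complex numbers $c(n)$, $n\ge0$, with $\sum_{0\le n<N}c(n)e^{int}\to g(t)$ for a.e. $t$; these coefficients are unique and are denoted $\hat g(n)$. Define $g^*(t)=\sup_N\left|\sum_{0\le n<N}\hat g(n)e^{int}\right|$, $G(z)=\sum_{n\ge0}\hat g(n)z^n$, and the Privalov cone $Q_t=\mathrm{conv}\big(\{e^{it}\}\cup\{z\in\mathbb{C}:|z|<\tfrac12\}\big)$ (closed convex hull as a subset of the closed unit disc). *)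

(* Defs.v *)
From Stdlib Require Import Reals.
Open Scope R_scope.

Definition Cx : Type := (R * R)%type.
Definition Cre (z : Cx) : R := fst z.
Definition Cim (z : Cx) : R := snd z.
Definition C0 : Cx := (0, 0).
Definition C1 : Cx := (1, 0).
Definition Cadd (z w : Cx) : Cx := (fst z + fst w, snd z + snd w).
Definition Csub (z w : Cx) : Cx := (fst z - fst w, snd z - snd w).
Definition Cmul (z w : Cx) : Cx :=
  (fst z * fst w - snd z * snd w, fst z * snd w + snd z * fst w).
Definition Cscale (r : R) (z : Cx) : Cx := (r * fst z, r * snd z).
Definition Cnorm (z : Cx) : R := sqrt (fst z * fst z + snd z * snd z).
Fixpoint Cpow (z : Cx) (n : nat) : Cx :=
  match n with O => C1 | S m => Cmul (Cpow z m) z end.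
Definition expi (t : R) : Cx := (cos t, sin t).

Fixpoint psum (c : nat -> Cx) (z : Cx) (N : nat) : Cx :=
  match N with
  | O => C0
  | S M => Cadd (psum c z M) (Cmul (c M) (Cpow z M))
  end.

Definition Ccv (u : nat -> Cx) (L : Cx) : Prop :=
  forall eps : R, eps > 0 ->
    exists N0 : nat, forall N : nat, (N >= N0)%nat -> Cnorm (Csub (u N) L) < eps.

Definition null_set (E : R -> Prop) : Prop :=
  forall eps : R, eps > 0 ->
    exists a b : nat -> R,
      (forall n, a n <= b n) /\
      (forall x, E x -> exists n, a n < x < b n) /\
      (forall N, sum_f_R0 (fun n => b n - a n) N <= eps).

(** * PLA: c is the (unique) PLA coefficient sequence of g : T -> Cx.
    Functions on T = R/2piZ are modelled as 2pi-periodic functions on R. *)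
Definition PLA_coeffs (g : R -> Cx) (c : nat -> Cx) : Prop :=
  (forall t, g (t + 2 * PI) = g t) /\
  null_set (fun t => ~ Ccv (fun N => psum c (expi t) N) (g t)).

Definition maximal_fn_eq (c : nat -> Cx) (t A : R) : Prop :=
  is_lub (fun x => exists N : nat, x = Cnorm (psum c (expi t) N)) A.

Definition Cconvex (K : Cx -> Prop) : Prop :=
  forall x y lam, K x -> K y -> 0 <= lam <= 1 ->
    K (Cadd (Cscale (1 - lam) x) (Cscale lam y)).
Definition Cclosed (K : Cx -> Prop) : Prop :=
  forall z, (forall eps, eps > 0 -> exists w, K w /\ Cnorm (Csub w z) < eps) -> K z.
Definition closed_conv_hull (S : Cx -> Prop) (z : Cx) : Prop :=
  forall K : Cx -> Prop, Cconvex K -> Cclosed K -> (forall w, S w -> K w) -> K z.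

Definition Privalov_cone (t : R) : Cx -> Prop :=
  closed_conv_hull (fun w => w = expi t \/ Cnorm w < 1 / 2).

(* Main.v *)
From Stdlib Require Import Reals Lra Lia Psatz.
From Coquelicot Require Import Coquelicot.
Require Import Defs.
From Stdlib Require Import Reals.
Open Scope R_scope.

Lemma Cnorm_Cmod z : Cnorm z = Cmod z.
Proof. unfold Cnorm, Cmod. f_equal. simpl. ring. Qed.

Lemma Cnorm_ge0 z : 0 <= Cnorm z.
Proof. rewrite Cnorm_Cmod. apply Cmod_ge_0. Qed.

Lemma Cnorm_add a b : Cnorm (Cadd a b) <= Cnorm a + Cnorm b.
Proof. rewrite !Cnorm_Cmod. apply (Cmod_triangle a b). Qed.

Lemma Cnorm_mul a b : Cnorm (Cmul a b) = Cnorm a * Cnorm b.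
Proof. rewrite !Cnorm_Cmod. apply (Cmod_mult a b). Qed.

Lemma Cnorm_opp a : Cnorm (Cscale (-1) a) = Cnorm a.
Proof. unfold Cnorm; simpl; f_equal; ring. Qed.

Lemma Cnorm_sub a b : Cnorm (Csub a b) <= Cnorm a + Cnorm b.
Proof.
  replace (Csub a b) with (Cadd a (Cscale (-1) b)).
  - rewrite <- (Cnorm_opp b). apply Cnorm_add.
  - unfold Csub, Cadd, Cscale; simpl; f_equal; ring.
Qed.

Lemma Cnorm_scale r a : Cnorm (Cscale r a) = Rabs r * Cnorm a.
Proof.
  unfold Cnorm, Cscale; simpl.
  replace (r * fst a * (r * fst a) + r * snd a * (r * snd a))
    with ((r*r) * (fst a * fst a + snd a * snd a)) by ring.
  rewrite sqrt_mult_alt.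
  - f_equal. apply sqrt_Rsqr_abs.
  - nra.
Qed.

Lemma Cnorm_pow z n : Cnorm (Cpow z n) = Cnorm z ^ n.
Proof.
  induction n; simpl.
  - unfold Cnorm, C1; simpl. replace (1*1+0*0) with 1 by ring. apply sqrt_1.
  - rewrite Cnorm_mul, IHn. ring.
Qed.

Lemma Cnorm_expi t : Cnorm (expi t) = 1.
Proof.
  unfold Cnorm, expi; simpl. rewrite <- sqrt_1. f_equal.
  pose proof (sin2_cos2 t). unfold Rsqr in H. lra.
Qed.

Lemma Cnorm_fst z : Rabs (fst z) <= Cnorm z.
Proof.
  unfold Cnorm. rewrite <- sqrt_Rsqr_abs. apply sqrt_le_1_alt.
  unfold Rsqr. nra.
Qed.

Lemma Cnorm_snd z : Rabs (snd z) <= Cnorm z.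
Proof.
  unfold Cnorm. rewrite <- sqrt_Rsqr_abs. apply sqrt_le_1_alt.
  unfold Rsqr. nra.
Qed.

Lemma Cnorm_small a b e : 0 < e -> Rabs a < e/2 -> Rabs b < e/2 -> Cnorm (a,b) < e.
Proof.
  intros He Ha Hb. unfold Cnorm; simpl.
  rewrite <- (sqrt_square e) by lra. apply sqrt_lt_1_alt.
  split. nra.
  assert (a*a = Rabs a * Rabs a) by (rewrite <- Rabs_mult; symmetry; apply Rabs_pos_eq; nra).
  assert (b*b = Rabs b * Rabs b) by (rewrite <- Rabs_mult; symmetry; apply Rabs_pos_eq; nra).
  pose proof (Rabs_pos a); pose proof (Rabs_pos b). nra.
Qed.


Lemma tel (x : nat -> R) M r : 0 <= r < 1 ->
  (forall n, Rabs (x (S n) - x n) <= M * r ^ n) ->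
  forall n p, Rabs (x (n + p)%nat - x n) <= M * (r ^ n - r ^ (n + p)) / (1 - r).
Proof.
  intros Hr H n p. induction p.
  - rewrite Nat.add_0_r. replace (x n - x n) with 0 by ring. rewrite Rabs_R0.
    replace (M * (r ^ n - r ^ n) / (1 - r)) with 0 by (field; lra). lra.
  - replace (n + S p)%nat with (S (n + p)) by lia.
    replace (x (S (n+p)) - x n) with ((x (S (n+p)) - x (n+p)%nat) + (x (n+p)%nat - x n)) by ring.
    eapply Rle_trans. apply Rabs_triang.
    specialize (H (n+p)%nat).
    replace (M * (r ^ n - r ^ S (n + p)) / (1 - r)) with
      (M * r ^ (n+p) + M * (r ^ n - r ^ (n + p)) / (1 - r)).
    + lra.
    + simpl. field. lra.
Qed.

Lemma cauchy_geom (x : nat -> R) M r : 0 <= r < 1 -> 0 <= M ->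
  (forall n, Rabs (x (S n) - x n) <= M * r ^ n) -> exists l, Un_cv x l.
Proof.
  intros Hr HM H.
  assert (Hc : Cauchy_crit x).
  { intros eps He.
    assert (Hy : 0 < eps * (1 - r) / (M + 1)).
    { apply Rdiv_lt_0_compat; [nra|lra]. }
    destruct (pow_lt_1_zero r ltac:(rewrite Rabs_pos_eq; lra) _ Hy) as [N HN].
    exists N. intros n m Hn Hm.
    assert (K : forall a b, (a >= N)%nat -> (a <= b)%nat -> R_dist (x b) (x a) < eps).
    { intros a b Ha Hab. unfold R_dist.
      replace b with (a + (b - a))%nat by lia.
      eapply Rle_lt_trans. apply (tel x M r Hr H).
      specialize (HN a Ha). rewrite Rabs_pos_eq in HN by (apply pow_le; lra).
      pose proof (pow_le r (a + (b-a)) ltac:(lra)).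
      apply Rmult_lt_reg_r with (1 - r). lra.
      unfold Rdiv. rewrite Rmult_assoc, Rinv_l by lra. rewrite Rmult_1_r.
      assert (r ^ a * (M+1) < eps * (1 - r)).
      { apply Rmult_lt_reg_r with (/ (M+1)). apply Rinv_0_lt_compat; lra.
        rewrite Rmult_assoc, Rinv_r by lra. lra. }
      nra. }
    destruct (Nat.le_gt_cases n m).
    - rewrite R_dist_sym. apply K; lia.
    - apply K; lia. }
  destruct (R_complete x Hc) as [l Hl]. exists l. exact Hl.
Qed.

Lemma Ccv_of_components (u : nat -> Cx) a b :
  Un_cv (fun n => fst (u n)) a -> Un_cv (fun n => snd (u n)) b -> Ccv u (a, b).
Proof.
  intros Ha Hb eps He.
  destruct (Ha (eps/2) ltac:(lra)) as [N1 H1].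
  destruct (Hb (eps/2) ltac:(lra)) as [N2 H2].
  exists (max N1 N2). intros N HN.
  unfold Csub. simpl. apply Cnorm_small; auto.
  - apply H1. lia.
  - apply H2. lia.
Qed.


Lemma Cpow_mul a b n : Cpow (Cmul a b) n = Cmul (Cpow a n) (Cpow b n).
Proof.
  induction n; cbn [Cpow].
  - unfold Cmul, Defs.C1; simpl; apply injective_projections; simpl; ring.
  - rewrite IHn. destruct (Cpow a n), (Cpow b n), a, b.
    unfold Cmul; simpl; apply injective_projections; simpl; ring.
Qed.

Lemma abel c u w T (HT : forall n, T n = psum c u (S n)) N : psum c (Cmul u w) N =
  Cadd (Cmul (psum c u N) (Cpow w N))
       (Cmul (Csub Defs.C1 w) (psum T w N)).
Proof.
  induction N.
  - cbn. unfold Cmul, Cadd, Csub, C0, Defs.C1; simpl; apply injective_projections; simpl; ring.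
  - cbn [psum Cpow]. rewrite IHN, Cpow_mul, HT. cbn [psum].
    generalize (psum c u N) (Cpow u N) (Cpow w N) (psum T w N) (c N).
    intros [] [] [] [] []. destruct w.
    unfold Cmul, Cadd, Csub, Defs.C1; simpl. apply injective_projections; simpl; ring.
Qed.

Lemma psum_bound d w B N : 0 <= B -> Cnorm w < 1 -> (forall n, Cnorm (d n) <= B) ->
  Cnorm (psum d w N) <= B * (1 - Cnorm w ^ N) / (1 - Cnorm w).
Proof.
  intros HB Hw Hd. pose proof (Cnorm_ge0 w).
  induction N; cbn [psum].
  - unfold Cnorm, C0; simpl. replace (0*0+0*0) with 0 by ring. rewrite sqrt_0.
    unfold Rdiv. replace (1 - 1) with 0 by ring. lra.
  - eapply Rle_trans. apply Cnorm_add.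
    rewrite Cnorm_mul, Cnorm_pow.
    specialize (Hd N). pose proof (pow_le (Cnorm w) N H).
    replace (B * (1 - Cnorm w ^ S N) / (1 - Cnorm w)) with
      (B * (1 - Cnorm w ^ N) / (1 - Cnorm w) + B * Cnorm w ^ N) by (simpl; field; lra).
    nra.
Qed.


Lemma le_eps x y : (forall e, e > 0 -> x <= y + e) -> x <= y.
Proof.
  intros H. destruct (Rle_dec x y); auto.
  specialize (H ((x - y)/2) ltac:(lra)). lra.
Qed.

Lemma cone_K t z : Privalov_cone t z -> Cnorm (Csub (expi t) z) + 3 * Cnorm z <= 3.
Proof.
  intros H. apply (H (fun z => Cnorm (Csub (expi t) z) + 3 * Cnorm z <= 3)).
  - intros x y lam Hx Hy Hl.
    set (z0 := Cadd (Cscale (1 - lam) x) (Cscale lam y)).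
    assert (E : Csub (expi t) z0 = Cadd (Cscale (1 - lam) (Csub (expi t) x)) (Cscale lam (Csub (expi t) y))).
    { unfold z0, Csub, Cadd, Cscale; apply injective_projections; simpl; ring. }
    rewrite E.
    pose proof (Cnorm_add (Cscale (1 - lam) (Csub (expi t) x)) (Cscale lam (Csub (expi t) y))).
    pose proof (Cnorm_add (Cscale (1 - lam) x) (Cscale lam y)).
    rewrite !Cnorm_scale in *. rewrite !Rabs_pos_eq in * by lra.
    fold z0 in H1. nra.
  - intros z1 Hz. apply le_eps. intros e He.
    destruct (Hz (e/4) ltac:(lra)) as [w [Hw Hd]].
    assert (E1 : Csub (expi t) z1 = Cadd (Csub (expi t) w) (Csub w z1)).
    { unfold Csub, Cadd; apply injective_projections; simpl; ring. }
    assert (E2 : z1 = Csub w (Csub w z1)).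
    { unfold Csub; apply injective_projections; simpl; ring. }
    pose proof (Cnorm_add (Csub (expi t) w) (Csub w z1)).
    pose proof (Cnorm_sub w (Csub w z1)).
    rewrite <- E1 in H0. rewrite <- E2 in H1. lra.
  - intros w [Hw | Hw].
    + subst w. unfold Csub. replace (fst (expi t) - fst (expi t), snd (expi t) - snd (expi t))
        with (Cscale 0 (expi t)) by (unfold Cscale; apply injective_projections; simpl; ring).
      rewrite Cnorm_scale, Cnorm_expi, Rabs_R0. lra.
    + pose proof (Cnorm_sub (expi t) w). rewrite Cnorm_expi in H0. lra.
Qed.


Theorem lemma1 (g : R -> Cx) (c : nat -> Cx) (t A : R) :
  PLA_coeffs g c ->
  maximal_fn_eq c t A ->
  forall z : Cx, Cnorm z < 1 ->
    exists Gz : Cx,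
      Ccv (fun N => psum c z N) Gz /\
      (Privalov_cone t z -> Cnorm Gz <= 3 * A).
Proof.
  intros _ Hmax z Hz.
  set (u := expi t).
  assert (HA : forall N, Cnorm (psum c u N) <= A).
  { intros N. apply (proj1 Hmax). exists N. reflexivity. }
  assert (A0 : 0 <= A). { pose proof (HA 0%nat). pose proof (Cnorm_ge0 (psum c u 0)). lra. }
  assert (Hu : Cnorm u = 1) by apply Cnorm_expi.
  assert (Hc : forall n, Cnorm (c n) <= 2 * A).
  { intros n.
    assert (E : Cmul (c n) (Cpow u n) = Csub (psum c u (S n)) (psum c u n)).
    { cbn [psum]. generalize (psum c u n) (c n) (Cpow u n). intros [] [] [].
      unfold Cmul, Csub, Cadd; apply injective_projections; simpl; ring. }
    pose proof (Cnorm_sub (psum c u (S n)) (psum c u n)).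
    rewrite <- E, Cnorm_mul, Cnorm_pow, Hu, pow1 in H.
    pose proof (HA (S n)). pose proof (HA n). lra. }
  set (r := Cnorm z).
  assert (Hr : 0 <= r < 1) by (split; [apply Cnorm_ge0 | exact Hz]).
  assert (Hterm : forall N, Cnorm (Cmul (c N) (Cpow z N)) <= 2 * A * r ^ N).
  { intros N. rewrite Cnorm_mul, Cnorm_pow. fold r.
    pose proof (pow_le r N (proj1 Hr)). pose proof (Hc N). nra. }
  destruct (cauchy_geom (fun N => fst (psum c z N)) (2 * A) r Hr ltac:(lra)) as [a Ha].
  { intros n. cbn [psum].
    replace (fst (Cadd (psum c z n) (Cmul (c n) (Cpow z n))) - fst (psum c z n))
      with (fst (Cmul (c n) (Cpow z n))) by (unfold Cadd; simpl; ring).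
    eapply Rle_trans. apply Cnorm_fst. apply Hterm. }
  destruct (cauchy_geom (fun N => snd (psum c z N)) (2 * A) r Hr ltac:(lra)) as [b Hb].
  { intros n. cbn [psum].
    replace (snd (Cadd (psum c z n) (Cmul (c n) (Cpow z n))) - snd (psum c z n))
      with (snd (Cmul (c n) (Cpow z n))) by (unfold Cadd; simpl; ring).
    eapply Rle_trans. apply Cnorm_snd. apply Hterm. }
  assert (Hcv : Ccv (fun N => psum c z N) (a, b)) by (apply Ccv_of_components; auto).
  exists (a, b). split; [exact Hcv|].
  intros Hcone. apply cone_K in Hcone. fold u in Hcone. fold r in Hcone.
  set (w := Cmul (cos t, - sin t) z).
  pose proof (sin2_cos2 t) as Hsc. unfold Rsqr in Hsc.
  assert (Huw : Cmul u w = z).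
  { unfold u, w, expi, Cmul. destruct z as [x y]. simpl. apply injective_projections; simpl.
    - replace x with (x * 1) at 3 by ring. rewrite <- Hsc. ring.
    - replace y with (y * 1) at 3 by ring. rewrite <- Hsc. ring. }
  assert (Hw : Cnorm w = r).
  { unfold w. rewrite Cnorm_mul. fold r.
    replace (Cnorm (cos t, - sin t)) with 1. ring.
    unfold Cnorm; simpl. rewrite <- sqrt_1. f_equal. nra. }
  assert (H1w : Cnorm (Csub Defs.C1 w) = Cnorm (Csub u z)).
  { rewrite <- Huw.
    replace (Csub u (Cmul u w)) with (Cmul u (Csub Defs.C1 w)).
    - rewrite Cnorm_mul, Hu. ring.
    - destruct u, w. unfold Cmul, Csub, Defs.C1; apply injective_projections; simpl; ring. }
  assert (Hbound : forall N, Cnorm (psum c z N) <= A * r ^ N + 3 * A).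
  { intros N. rewrite <- Huw.
    rewrite (abel c u w (fun n => psum c u (S n)) (fun n => eq_refl) N).
    eapply Rle_trans. apply Cnorm_add.
    rewrite !Cnorm_mul, Cnorm_pow, Hw.
    pose proof (psum_bound (fun n => psum c u (S n)) w A N A0 ltac:(lra) (fun n => HA (S n))) as HP.
    rewrite Hw in HP.
    pose proof (HA N). pose proof (pow_le r N (proj1 Hr)).
    assert (r ^ N <= 1) by (destruct N; [simpl; lra | pose proof (pow_lt_1_compat r (S N) Hr ltac:(lia)); lra]).
    pose proof (Cnorm_ge0 (Csub Defs.C1 w)).
    pose proof (Cnorm_ge0 (psum (fun n => psum c u (S n)) w N)).
    assert (Cnorm (Csub Defs.C1 w) <= 3 * (1 - r)) by lra.
    assert (A * (1 - r ^ N) / (1 - r) * (1 - r) = A * (1 - r ^ N)) by (field; lra).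
    assert (Cnorm (Csub Defs.C1 w) * Cnorm (psum (fun n => psum c u (S n)) w N)
            <= 3 * (1 - r) * (A * (1 - r ^ N) / (1 - r))).
    { apply Rmult_le_compat; lra. }
    nra. }
  apply le_eps. intros e He.
  destruct (Hcv (e/2) ltac:(lra)) as [N1 HN1].
  destruct (pow_lt_1_zero r ltac:(rewrite Rabs_pos_eq; lra) (e / 2 / (A + 1))
    ltac:(apply Rdiv_lt_0_compat; lra)) as [N2 HN2].
  set (N := max N1 N2).
  specialize (HN1 N ltac:(unfold N; lia)). specialize (HN2 N ltac:(unfold N; lia)).
  rewrite Rabs_pos_eq in HN2 by (apply pow_le; lra).
  assert (E : (a, b) = Csub (psum c z N) (Csub (psum c z N) (a, b))).
  { unfold Csub; apply injective_projections; simpl; ring. }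
  pose proof (Cnorm_sub (psum c z N) (Csub (psum c z N) (a, b))). rewrite <- E in H.
  pose proof (Hbound N).
  assert (r ^ N * (A + 1) < e / 2).
  { apply Rmult_lt_reg_r with (/ (A+1)). apply Rinv_0_lt_compat; lra.
    rewrite Rmult_assoc, Rinv_r by lra. lra. }
  pose proof (pow_le r N (proj1 Hr)). nra.
Qed.
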